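(* For $d\in D$ let $d'=d+1/(2N)$ if $d<1/2$, $d'=d$ if $d=1/2$, $d'=d-1/(2N)$ if $d>1/2$, and $f(d)=d'(1-d')$. Then $\sum_{d\in D}f(d)=\frac N6+\frac14-\frac1{6N}$. Moreover, if $T\ge \frac23N^3+N^2-\frac23N$, then for every mixed strategy $\tau$ of the rainmaker, the forecaster strategy $c_t=$ rounding of $p_t=\mathbb P_\tau[a_t=1\mid h_{t-1}]$ to the nearest point of $D$ (fixed tie-breaking) satisfies $\mathbb E[K_T]\le 1/N$.
   Context: Forecasting game: fix a positive integer $N$, the grid $D=\{1/(2N),3/(2N),\dots,(2N-1)/(2N)\}\subset[0,1]$ (which has $N$ points), and a horizon $T$. In each period $t=1,\dots,T$ the rainmaker chooses the weather $a_t\in\{0,1\}$ (1 = rain) and the forecaster chooses a forecast $c_t\in D$; both players have perfect recall, i.e. each may condition its period-$t$ choice on the full history $h_{t-1}=(a_1,c_1,\dots,a_{t-1},c_{t-1})\in(\{0,1\}\times D)^{t-1}$. A pure strategy of a player is a map from histories to its choice set; a mixed strategy is a probability distribution over its (finitely many) pure strategies. For $d\in D$ let $n(d)=\sum_{t=1}^T \mathbf 1_{c_t=d}$ and, when $n(d)>0$, $\bar a(d)=\frac{1}{n(d)}\sum_{t=1}^T\mathbf 1_{c_t=d}\,a_t$. The calibration score is $K_T=\sum_{d\in D}\frac{n(d)}{T}\,|\bar a(d)-d|$ (terms with $n(d)=0$ are $0$); equivalently $K_T=\frac1T\sum_{d\in D}\big|\sum_{t=1}^T\mathbf 1_{c_t=d}(a_t-d)\big|$.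 Expectations are over the random choices of both players. *)

(* Defs.v *)
From HB Require Import structures.
From mathcomp Require Import all_boot all_order all_algebra.
From mathcomp Require Import reals.
Set Implicit Arguments. Unset Strict Implicit. Unset Printing Implicit Defensive.
Import Order.TTheory GRing.Theory Num.Theory.
Local Open Scope ring_scope.

Section Game.
Variables (R : realType) (N T : nat).

(* One period's outcome: (weather a_t, index k of forecast c_t = grid k). *)
Definition Stage := (bool * 'I_N)%type.

Definition grid (k : 'I_N) : R := (2 * k + 1)%:R / (2 * N)%:R.

Definition shiftd (d : R) : R :=
  if d < 1/2 then d + 1 / (2 * N)%:R
  else if d == 1/2 then d else d - 1 / (2 * N)%:R.
Definition fd (d : R) : R := shiftd d * (1 - shiftd d).

(* All histories h_{t-1} with t = 1..T, i.e. of length 0..T-1. *)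
Definition hists : seq (seq Stage) :=
  flatten [seq [seq tval t | t : k.-tuple Stage] | k <- iota 0 T].
Definition Hist := seq_sub hists.

Definition Pure := {ffun Hist -> bool}.

Definition act (s : Pure) (h : seq Stage) : bool :=
  if insub h is Some x then s x else false.

Definition consistent (s : Pure) (h : seq Stage) : bool :=
  all (fun i => act s (take i h) == nth false (map fst h) i) (iota 0 (size h)).

(* P_tau[a_t = 1 | h_{t-1} = h]  (0 if h has probability 0). *)
Definition prob_rain (tau : {ffun Pure -> R}) (h : seq Stage) : R :=
  (\sum_(s | consistent s h && act s h) tau s) / (\sum_(s | consistent s h) tau s).

Fixpoint play (s : Pure) (F : seq Stage -> 'I_N) (t : nat) : seq Stage :=
  if t is t'.+1 then
    let h := play s F t' in rcons h (act s h, F h)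
  else [::].

Definition calib (p : seq Stage) : R :=
  T%:R^-1 * \sum_(k < N) `| \sum_(x <- p | x.2 == k) ((x.1)%:R - grid k) |.

End Game.

(* Main.v *)
Require Import Defs.
From HB Require Import structures.
From mathcomp Require Import all_boot all_order all_algebra.
From mathcomp Require Import reals.
From mathcomp Require Import ring lra zify.
Set Implicit Arguments. Unset Strict Implicit. Unset Printing Implicit Defensive.
Import Order.TTheory GRing.Theory Num.Theory.
Local Open Scope ring_scope.

Section Play.
Variables (N T : nat) (F : seq (Stage N) -> 'I_N).

Lemma size_play (s : Pure N T) u : size (play s F u) = u.
Proof. by elim: u => //= u IH; rewrite size_rcons IH. Qed.

Lemma play_take (s : Pure N T) u v : (v <= u)%N -> take v (play s F u) = play s F v.
Proof.
elim: u => [|u IH] Hv; first by case: v Hv.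
rewrite leq_eqVlt in Hv; case/orP: Hv => [/eqP->|Hv].
  by rewrite take_oversize // size_play.
have Hv' : (v <= u)%N by rewrite -ltnS.
by rewrite /= -cats1 takel_cat ?size_play // IH.
Qed.

Lemma nth_play (s : Pure N T) u t x0 : (t < u)%N ->
  nth x0 (play s F u) t = (act s (play s F t), F (play s F t)).
Proof.
elim: u => [|u IH] //= Ht.
rewrite nth_rcons size_play.
rewrite ltnS leq_eqVlt in Ht; case/orP: Ht => [/eqP->|Ht].
  by rewrite ltnn eqxx.
by rewrite Ht IH.
Qed.

Lemma consistent_rcons (s : Pure N T) h x :
  consistent s (rcons h x) = consistent s h && (act s h == x.1).
Proof.
rewrite /consistent size_rcons -addn1 iotaD all_cat /= andbT add0n.
congr andb.
  apply: eq_in_all => i; rewrite mem_iota add0n => /andP[_ Hi].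
  by rewrite -cats1 take_cat Hi map_cat nth_cat size_map Hi.
by rewrite -cats1 take_cat ltnn subnn take0 cats0 map_cat nth_cat size_map ltnn subnn.
Qed.

Lemma consistent_play (s s' : Pure N T) u :
  consistent s' (play s F u) = (play s' F u == play s F u).
Proof.
elim: u => [|u IH] //=.
rewrite consistent_rcons IH /=.
apply/idP/idP.
  by case/andP => /eqP-> /eqP->.
rewrite eqseq_rcons => /andP[/eqP-> /eqP[->]].
by rewrite !eqxx.
Qed.

Lemma play_meas (s s' : Pure N T) u t : play s F u = play s' F u -> (t < u)%N ->
  play s F t = play s' F t /\ act s (play s F t) = act s' (play s' F t).
Proof.
move=> E Ht; split.
  by rewrite -(play_take s (ltnW Ht)) E play_take // ltnW.
have := nth_play s (act s (play s F 0), F (play s F 0)) Ht.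
by rewrite E nth_play // => -[].
Qed.
End Play.
Section Grid.
Variables (R : realType) (N : nat).
Hypothesis hN : (0 < N)%N.

Let x : R := N%:R.
Lemma x_gt0 : 0 < x. Proof. by rewrite /x ltr0n. Qed.
Lemma twoN_gt0 : 0 < (2 * N)%:R :> R. Proof. by rewrite ltr0n muln_gt0. Qed.
Lemma twoNE : (2 * N)%:R = 2 * x :> R. Proof. by rewrite natrM. Qed.

Lemma halfx : 1 / 2 * (2 * N)%:R = x :> R.
Proof. by rewrite twoNE; field; rewrite ?pnatr_eq0. Qed.
Lemma half_le a : (a%:R / (2 * N)%:R <= 1 / 2 :> R) = (a <= N)%N.
Proof. by rewrite ler_pdivrMr ?twoN_gt0 // halfx ler_nat. Qed.
Lemma half_lt a : (a%:R / (2 * N)%:R < 1 / 2 :> R) = (a < N)%N.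
Proof. by rewrite ltr_pdivrMr ?twoN_gt0 // halfx ltr_nat. Qed.
Lemma half_eq a : (a%:R / (2 * N)%:R == 1 / 2 :> R) = (a == N)%N.
Proof. by rewrite eq_le half_le -[_ <= _]negbK -ltNge ltNge -!real_ltNge ?num_real // half_lt -leqNgt eqn_leq. Qed.

Lemma grid_plus (k : 'I_N) : grid R k + 1 / (2 * N)%:R = (2 * k + 2)%:R / (2 * N)%:R.
Proof. have hx : 0 < N%:R :> R by rewrite ltr0n. rewrite /grid !natrD ?addr0; field; apply: lt0r_neq0; lra. Qed.
Lemma grid_minus (k : 'I_N) : grid R k - 1 / (2 * N)%:R = (2 * k)%:R / (2 * N)%:R.
Proof. have hx : 0 < N%:R :> R by rewrite ltr0n. rewrite /grid !natrD ?addr0; field; apply: lt0r_neq0; lra. Qed.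

Definition hh (j : nat) : R := j%:R / x * (1 - j%:R / x).

Lemma fd_grid (k : 'I_N) : @fd R N (grid R k) =
  hh k + (if (2 * k + 1 < N)%N then hh k.+1 - hh k else 0)
       + (if (2 * k + 1 == N)%N then 1 / 4 - hh k else 0).
Proof.
have hx : 0 < N%:R :> R by rewrite ltr0n.
rewrite /fd /shiftd /hh.
case: (ltngtP (2 * k + 1) N) => Hk.
- rewrite half_lt Hk grid_plus /x !natrM !natrD /= ; by field; apply: lt0r_neq0; lra.
- rewrite half_lt ltnNge ltnW //= half_eq gtn_eqF //= grid_minus /x !natrM.
  rewrite !addr0; by field; apply: lt0r_neq0; lra.
- have Hg : grid R k = 1 / 2 by apply/eqP; rewrite half_eq Hk.
  rewrite half_lt Hk ltnn Hg eqxx /x addr0; by field; apply: lt0r_neq0; lra.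
Qed.

Lemma sum_hh n : \sum_(0 <= k < n) hh k =
  (x * (n%:R * (n%:R - 1)) / 2 - (n%:R - 1) * n%:R * (2 * n%:R - 1) / 6) / x ^+ 2.
Proof.
have hx : 0 < N%:R :> R by rewrite ltr0n.
elim: n => [|n IH]; first by rewrite big_geq //; field; apply: lt0r_neq0; lra.
rewrite big_nat_recr //= IH /hh -addn1 natrD /x.
by field; apply: lt0r_neq0; lra.
Qed.

Lemma sum_fd : \sum_(k < N) @fd R N (grid R k) = N%:R / 6 + 1 / 4 - 1 / (6 * N%:R).
Proof.
have hx : 0 < N%:R :> R by rewrite ltr0n.
rewrite (eq_bigr _ (fun k _ => fd_grid k)) !big_split /=.
rewrite -(big_mkord xpredT hh).
rewrite -(big_mkord xpredT (fun k => if (2 * k + 1 < N)%N then hh k.+1 - hh k else 0)).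
rewrite -(big_mkord xpredT (fun k => if (2 * k + 1 == N)%N then 1 / 4 - hh k else 0)).
have hm : (N./2 < N)%N by rewrite -divn2; lia.
have hm' := ltnW hm.
rewrite [X in _ + X + _](big_cat_nat (n := N./2)) //=.
rewrite [X in _ + (_ + X) + _](_ : _ = 0); last first.
  rewrite big_nat_cond big1 // => i /andP[/andP[Hi1 Hi2] _].
  by have -> : (2 * i + 1 < N)%N = false by move: Hi1; rewrite -divn2; lia.
rewrite [X in _ + (X + _) + _](eq_big_nat _ _ (F2 := fun k => hh k.+1 - hh k)); last first.
  by move=> i /andP[_ Hi]; have -> : (2 * i + 1 < N)%N by move: Hi; rewrite -divn2; lia.
rewrite telescope_sumr //.
rewrite [X in _ + _ + X](big_cat_nat (n := N./2.+1)) //= big_nat_recr //=.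
rewrite [X in _ + (X + _ + _)](_ : _ = 0); last first.
  rewrite big_nat_cond big1 // => i /andP[/andP[_ Hi] _].
  by have -> : (2 * i + 1 == N)%N = false by move: Hi; rewrite -divn2; lia.
rewrite [X in _ + (_ + _ + X)](_ : _ = 0); last first.
  rewrite big_nat_cond big1 // => i /andP[/andP[Hi _] _].
  by have -> : (2 * i + 1 == N)%N = false by move: Hi; rewrite -divn2; lia.
rewrite sum_hh /hh /x.
have [Ho|Ho] := boolP (odd N).
  have -> : (2 * N./2 + 1 == N)%N by move: Ho (odd_double_half N); rewrite -divn2 -mul2n; case: (odd N) => //; lia.
  by field; apply: lt0r_neq0; lra.
have -> : (2 * N./2 + 1 == N)%N = false by move: Ho (odd_double_half N); rewrite -divn2 -mul2n; case: (odd N) => //; lia.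
have Hm : (N./2)%:R = N%:R / 2 :> R.
  have E : (N = 2 * N./2)%N by move: Ho (odd_double_half N); rewrite -divn2 -mul2n; case: (odd N) => //; lia.
  by rewrite {2}E natrM; field.
rewrite Hm. by field; apply: lt0r_neq0; lra.
Qed.

Lemma half_ge a : (1 / 2 <= a%:R / (2 * N)%:R :> R) = (N <= a)%N.
Proof. by rewrite ler_pdivlMr ?twoN_gt0 // halfx ler_nat. Qed.

Lemma near_exists p : 0 <= p <= 1 -> exists j : 'I_N, `|p - grid R j| <= 1 / (2 * N)%:R.
Proof.
move=> /andP[p0 p1].
have hx : 0 < N%:R :> R by rewrite ltr0n.
have px0 : 0 <= p * N%:R by rewrite mulr_ge0 // ler0n.
have /andP[h1 h2] := truncn_itv px0.
move: h1 h2; set n := Num.truncn _ => h1 h2.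
rewrite -addn1 natrD in h2.
case: (ltnP n N) => Hn.
  exists (Ordinal Hn); rewrite ler_distl grid_minus grid_plus /=.
  rewrite ler_pdivrMr ?twoN_gt0 // ler_pdivlMr ?twoN_gt0 // twoNE !natrD ?natrM ?addr0.
  apply/andP; split; lra.
have HN1 : (N.-1 < N)%N by rewrite prednK.
exists (Ordinal HN1); rewrite ler_distl grid_minus grid_plus /=.
have E : (N.-1)%:R = N%:R - 1 :> R.
  have {2}-> : N = (N.-1).+1 by rewrite prednK.
  by rewrite -addn1 natrD addrK.
have Hn' : N%:R <= n%:R :> R by rewrite ler_nat.
rewrite ler_pdivrMr ?twoN_gt0 // ler_pdivlMr ?twoN_gt0 // twoNE !natrD ?natrM ?addr0 E.
apply/andP; split; nra.
Qed.

Lemma var_bound (k : 'I_N) p : `|p - grid R k| <= 1 / (2 * N)%:R ->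
  p * (1 - p) <= @fd R N (grid R k).
Proof.
rewrite ler_distl grid_minus grid_plus => /andP[Hl Hu].
rewrite /fd /shiftd.
case: (ltngtP (2 * k + 1) N) => Hk.
- rewrite half_lt Hk grid_plus.
  have : (2 * k + 2)%:R / (2 * N)%:R <= 1 / 2 :> R by rewrite half_le; lia.
  move: Hu; set q := _ / _ => Hu Hq; nra.
- rewrite half_lt ltnNge ltnW //= half_eq gtn_eqF //= grid_minus.
  have : 1 / 2 <= (2 * k)%:R / (2 * N)%:R :> R by rewrite half_ge; lia.
  move: Hl; set q := _ / _ => Hl Hq; nra.
- have Hg : grid R k = 1 / 2 by apply/eqP; rewrite half_eq Hk.
  rewrite half_lt Hk ltnn Hg eqxx; have := sqr_ge0 (p - 1 / 2); nra.
Qed.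
Lemma fk_pos (k : 'I_N) : 0 < @fd R N (grid R k).
Proof.
rewrite /fd /shiftd.
case: (ltngtP (2 * k + 1) N) => Hk.
- rewrite half_lt Hk grid_plus.
  have : (2 * k + 2)%:R / (2 * N)%:R <= 1 / 2 :> R by rewrite half_le; lia.
  have : 0 < (2 * k + 2)%:R / (2 * N)%:R :> R by rewrite divr_gt0 ?twoN_gt0 // ltr0n addn2.
  set q := _ / _ => H1 H2; nra.
- rewrite half_lt ltnNge ltnW //= half_eq gtn_eqF //= grid_minus.
  have : 1 / 2 <= (2 * k)%:R / (2 * N)%:R :> R by rewrite half_ge; lia.
  have : (2 * k)%:R / (2 * N)%:R < 1 :> R.
    by rewrite ltr_pdivrMr ?twoN_gt0 // mul1r ltr_nat ltn_pmul2l.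
  set q := _ / _ => H1 H2; nra.
- have Hg : grid R k = 1 / 2 by apply/eqP; rewrite half_eq Hk.
  rewrite half_lt Hk ltnn Hg eqxx; lra.
Qed.
End Grid.

Lemma norm_amgm (R : realType) (a m : R) : 0 < a -> `|m| <= a + m ^+ 2 / (4 * a).
Proof.
move=> a0; set y := `|m|.
have -> : m ^+ 2 = y ^+ 2 by rewrite /y real_normK ?num_real.
have E : a + y ^+ 2 / (4 * a) - y = (y - 2 * a) ^+ 2 / (4 * a).
  by field; apply: lt0r_neq0; lra.
have : 0 <= (y - 2 * a) ^+ 2 / (4 * a) by rewrite divr_ge0 ?sqr_ge0 //; lra.
lra.
Qed.

Lemma sum_ind (N : nat) (R : realType) (j : 'I_N) (G : 'I_N -> R) :
  \sum_(k < N) (j == k)%:R * G k = G j.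
Proof.
rewrite (bigD1 j) //= eqxx mul1r big1 ?addr0 // => k /negbTE.
by rewrite eq_sym => ->; rewrite mul0r.
Qed.

Section Main.
Variables (R : realType) (N T : nat) (tau : {ffun Pure N T -> R}) (rnd : R -> 'I_N).
Hypothesis hN : (0 < N)%N.
Hypothesis tau_ge0 : forall s, 0 <= tau s.
Hypothesis rnd_near : forall (p : R) (k : 'I_N), `|p - grid R (rnd p)| <= `|p - grid R k|.

Let F := fun h : seq (Stage N) => rnd (prob_rain tau h).
Let pp u (s : Pure N T) := prob_rain tau (play s F u).
Let aa u (s : Pure N T) : R := (act s (play s F u))%:R.
Let ind (k : 'I_N) u (s : Pure N T) : R := (F (play s F u) == k)%:R.
Let M k u (s : Pure N T) := \sum_(t < u) ind k t s * (aa t s - pp t s).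

Lemma prob_ge0 h : 0 <= prob_rain tau h.
Proof. by rewrite /prob_rain divr_ge0 // sumr_ge0. Qed.

Lemma prob_le1 h : prob_rain tau h <= 1.
Proof.
rewrite /prob_rain; set a := \sum_(s | _) _; set b := \sum_(s | _) _.
have ab : a <= b.
  rewrite /a /b big_mkcond [X in _ <= X]big_mkcond; apply: ler_sum => s _.
  by case: consistent; case: act => //=.
have [->|b0] := eqVneq b 0; first by rewrite invr0 mulr0.
have bp : 0 < b by rewrite lt0r b0 sumr_ge0.
by rewrite ler_pdivrMr // mul1r.
Qed.

Lemma near_rnd p : 0 <= p <= 1 -> `|p - grid R (rnd p)| <= 1 / (2 * N)%:R.
Proof. by move=> Hp; have [j Hj] := near_exists hN Hp; exact: le_trans (rnd_near p j) Hj. Qed.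

Lemma mart u (g : Pure N T -> R) :
  (forall s s', play s F u = play s' F u -> g s = g s') ->
  \sum_s tau s * (g s * (aa u s - pp u s)) = 0.
Proof.
move=> Hg.
pose e (s s' : Pure N T) : R := (play s' F u == play s F u)%:R.
pose D (s : Pure N T) := \sum_s' e s s' * tau s'.
have Hp : forall s, pp u s = (\sum_s' e s s' * (tau s' * aa u s')) / D s.
  move=> s; rewrite /pp /prob_rain /D; congr (_ / _); rewrite big_mkcond;
    apply: eq_bigr => s' _; rewrite consistent_play /e.
    case: eqP => [E|_] /=; last by rewrite mul0r.
    by rewrite /aa E; case: act; rewrite /= ?mul1r ?mulr1 ?mulr0.
  by case: eqP => [E|_] /=; rewrite ?mul1r ?mul0r.
have De : forall s s', play s' F u = play s F u -> D s' = D s.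
  by move=> s s' E; rewrite /D /e E.
have tD : forall s, tau s * D s / D s = tau s.
  move=> s; have [D0|nz] := eqVneq (D s) 0; last by rewrite mulfK.
  have Hnn : forall s', true -> 0 <= e s s' * tau s' by move=> s' _; rewrite mulr_ge0 // ler0n.
  have := psumr_eq0P Hnn D0 (i := s) isT; rewrite /e eqxx mul1r => ->.
  by rewrite mul0r mul0r.
have Hr : \sum_s tau s * (g s * pp u s) = \sum_s tau s * (g s * aa u s).
  transitivity (\sum_s \sum_s' tau s * g s * (e s s' * (tau s' * aa u s')) / D s).
    apply: eq_bigr => s _; rewrite Hp mulr_suml !mulr_sumr; apply: eq_bigr => s' _.
    by rewrite !mulrA.
  rewrite exchange_big /=; apply: eq_bigr => s' _.
  transitivity (\sum_s e s' s * tau s * (g s' * tau s' * aa u s' / D s')).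
    apply: eq_bigr => s _; rewrite /e.
    case: (eqVneq (play s F u) (play s' F u)) => [E|ne].
      by rewrite (Hg s s' E) (De s' s E) /=; ring.
    by rewrite /=; ring.
  rewrite -mulr_suml.
  change (D s' * (g s' * tau s' * aa u s' / D s') = tau s' * (g s' * aa u s')).
  rewrite -[in RHS](tD s').
  ring.
rewrite (eq_bigr (fun s => tau s * (g s * aa u s) - tau s * (g s * pp u s))); last first.
  by move=> s _; rewrite mulrBr mulrBr.
by rewrite sumrB Hr subrr.
Qed.

Lemma pp01 u s : 0 <= pp u s <= 1.
Proof. by rewrite prob_ge0 prob_le1. Qed.

Lemma M_meas k u s s' : play s F u = play s' F u -> M k u s = M k u s'.
Proof.
move=> E; rewrite /M; apply: eq_bigr => t _.
have [E1 E2] := play_meas E (ltn_ord t).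
by rewrite /ind /aa /pp E2 E1.
Qed.

Lemma calib_sum s k u :
  \sum_(x <- play s F u | x.2 == k) ((x.1)%:R - grid R k) =
  \sum_(t < u) ind k t s * (aa t s - grid R k).
Proof.
elim: u => [|u IH]; first by rewrite big_nil big_ord0.
rewrite /= big_rcons IH big_ord_recr /=; congr (_ + _).
by rewrite /ind /aa; case: (_ == k); rewrite ?mul1r ?mul0r.
Qed.

Lemma var k u : \sum_s tau s * (M k u s) ^+ 2 <=
  @fd R N (grid R k) * \sum_(t < u) \sum_s tau s * ind k t s.
Proof.
elim: u => [|u IH].
  by rewrite big_ord0 mulr0 big1 // => s _; rewrite /M big_ord0 expr0n mulr0.
have HM : forall s, M k u.+1 s = M k u s + ind k u s * (aa u s - pp u s).
  by move=> s; rewrite /M big_ord_recr.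
have Hid : forall s, tau s * (M k u.+1 s) ^+ 2 =
   tau s * (M k u s) ^+ 2 + 2 * (tau s * ((M k u s * ind k u s) * (aa u s - pp u s)))
   + tau s * ((ind k u s * (1 - 2 * pp u s)) * (aa u s - pp u s))
   + tau s * (ind k u s * (pp u s * (1 - pp u s))).
  move=> s; rewrite HM /ind /aa; case: (_ == k); case: act; rewrite /=; ring.
have m1 : \sum_s tau s * ((M k u s * ind k u s) * (aa u s - pp u s)) = 0.
  apply: (mart (g := fun s => M k u s * ind k u s)) => s s' E.
  by rewrite (M_meas k E) /ind E.
have m2 : \sum_s tau s * ((ind k u s * (1 - 2 * pp u s)) * (aa u s - pp u s)) = 0.
  apply: (mart (g := fun s => ind k u s * (1 - 2 * pp u s))) => s s' E.
  by rewrite /ind /pp E.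
rewrite (eq_bigr _ (fun s _ => Hid s)) !big_split /= -mulr_sumr m1 m2 mulr0 !addr0.
rewrite big_ord_recr /= mulrDr lerD // mulr_sumr ler_sum // => s _.
rewrite /ind; case: eqP => [Hk|_] /=; last by rewrite !mul0r !mulr0.
rewrite !mul1r mulr1 [X in _ <= X]mulrC; apply: ler_wpM2l => //.
rewrite -Hk /F; apply: var_bound => //; exact: (near_rnd (pp01 u s)).
Qed.

Lemma main_bound : \sum_s tau s = 1 ->
  4 * N%:R ^+ 2 * (\sum_(k < N) @fd R N (grid R k)) <= T%:R ->
  \sum_s tau s * calib R T (play s F T) <= 1 / N%:R.
Proof.
move=> tau1 HT.
set G := \sum_(k < N) _ in HT.
have hx : 0 < N%:R :> R by rewrite ltr0n.
have fpos : forall k : 'I_N, 0 < @fd R N (grid R k) := fun k => @fk_pos R N hN k.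
have G0 : 0 < G.
  rewrite /G (bigD1 (Ordinal hN)) //=.
  have := fpos (Ordinal hN).
  have : 0 <= \sum_(k < N | k != Ordinal hN) @fd R N (grid R k) by rewrite sumr_ge0 // => k _; rewrite ltW.
  lra.
have Tp : 0 < T%:R :> R.
  have : 0 < 4 * N%:R ^+ 2 * G :> R by rewrite !mulr_gt0 // exprn_gt0.
  lra.
pose c : R := 1 / (2 * N)%:R.
pose A s := \sum_(k < N) (N%:R * @fd R N (grid R k) +
               (M k T s) ^+ 2 / (4 * (N%:R * @fd R N (grid R k)))).
have Hs : forall s, calib R T (play s F T) <= T%:R^-1 * (A s + T%:R * c).
  move=> s; rewrite /calib; apply: ler_wpM2l; first by rewrite invr_ge0 ler0n.
  apply: (le_trans (y := \sum_(k < N) ((N%:R * @fd R N (grid R k) +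
               (M k T s) ^+ 2 / (4 * (N%:R * @fd R N (grid R k)))) +
               \sum_(t < T) ind k t s * `|pp t s - grid R k|))).
    apply: ler_sum => k _; rewrite calib_sum.
    have -> : \sum_(t < T) ind k t s * (aa t s - grid R k) =
        M k T s + \sum_(t < T) ind k t s * (pp t s - grid R k).
      by rewrite /M -big_split; apply: eq_bigr => t _ /=; ring.
    apply: (le_trans (ler_normD _ _)); apply: lerD.
      by apply: norm_amgm; rewrite mulr_gt0.
    apply: (le_trans (ler_norm_sum _ _ _)); apply: ler_sum => t _.
    by rewrite normrM /ind normr_nat.
  rewrite big_split /= lerD2l exchange_big /=.
  have -> : T%:R * c = \sum_(t < T) c by rewrite sumr_const card_ord mulr_natl.
  apply: ler_sum => t _.
  rewrite /ind (sum_ind (F (play s F t)) (fun k => `|pp t s - grid R k|)).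
  exact: (near_rnd (pp01 t s)).
apply: (le_trans (y := \sum_s tau s * (T%:R^-1 * (A s + T%:R * c)))).
  by apply: ler_sum => s _; apply: ler_wpM2l.
have E1 : \sum_s tau s * (T%:R^-1 * (A s + T%:R * c)) =
   T%:R^-1 * (\sum_s tau s * A s + T%:R * c).
  rewrite (eq_bigr (fun s => T%:R^-1 * (tau s * A s) + T%:R^-1 * (T%:R * c) * tau s)); last first.
    by move=> s _; ring.
  by rewrite big_split /= -mulr_sumr -mulr_sumr tau1 mulr1 mulrDr.
have E2 : \sum_s tau s * A s = \sum_(k < N) (N%:R * @fd R N (grid R k) +
    (\sum_s tau s * (M k T s) ^+ 2) / (4 * (N%:R * @fd R N (grid R k)))).
  rewrite /A; under eq_bigr do rewrite mulr_sumr.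
  rewrite exchange_big /=; apply: eq_bigr => k _.
  rewrite (eq_bigr (fun s => N%:R * @fd R N (grid R k) * tau s +
      (tau s * M k T s ^+ 2) / (4 * (N%:R * @fd R N (grid R k))))); last first.
    by move=> s _; ring.
  by rewrite big_split /= -mulr_sumr tau1 mulr1 -mulr_suml.
have E3 : \sum_s tau s * A s <= N%:R * G + T%:R / (4 * N%:R).
  rewrite E2.
  apply: (le_trans (y := \sum_(k < N) (N%:R * @fd R N (grid R k) +
      (\sum_(t < T) \sum_s tau s * ind k t s) / (4 * N%:R)))).
    apply: ler_sum => k _; rewrite lerD2l.
    apply: (le_trans (y := (@fd R N (grid R k) * \sum_(t < T) \sum_s tau s * ind k t s) /
                          (4 * (N%:R * @fd R N (grid R k))))).
      by apply: ler_wpM2r; [rewrite invr_ge0 mulr_ge0 // mulr_ge0 // ltW | exact: var].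
    have := fpos k => fk; rewrite le_eqVlt; apply/orP; left; apply/eqP.
    by field; rewrite ?(gt_eqF fk) ?(gt_eqF hx) //; lra.
  rewrite big_split /= -mulr_sumr -mulr_suml.
  have -> : \sum_(k < N) \sum_(t < T) \sum_s tau s * ind k t s = T%:R.
    rewrite exchange_big /= (eq_bigr (fun _ => 1)); last first.
      move=> t _; rewrite exchange_big /=.
      rewrite -tau1; apply: eq_bigr => s _.
      rewrite -mulr_sumr /ind.
      rewrite (eq_bigr (fun k : 'I_N => (F (play s F t) == k)%:R * 1)); last by move=> k _; rewrite mulr1.
      by rewrite sum_ind mulr1.
    by rewrite sumr_const card_ord.
  done.
rewrite E1.
have key : N%:R * G + T%:R / (4 * N%:R) + T%:R * c - 1 / N%:R * T%:R =
           (4 * N%:R ^+ 2 * G - T%:R) / (4 * N%:R).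
  rewrite /c twoNE; field; lra.
have : (4 * N%:R ^+ 2 * G - T%:R) / (4 * N%:R) <= 0.
  by rewrite ler_pdivrMr ?mul0r; [lra | lra].
move=> H.
rewrite mulrC ler_pdivrMr // ; lra.
Qed.

End Main.

Unset Implicit Arguments.

Theorem mainTheorem5 (R : realType) (N T : nat) (hN : (0 < N)%N) :
  \sum_(k < N) @fd R N (grid R k) = N%:R / 6 + 1 / 4 - 1 / (6 * N%:R)
  /\
  ((2 / 3 : R) * N%:R ^+ 3 + N%:R ^+ 2 - (2 / 3) * N%:R <= T%:R ->
   forall tau : {ffun Pure N T -> R},
     (forall s, 0 <= tau s) -> \sum_s tau s = 1 ->
   forall rnd : R -> 'I_N,
     (forall (p : R) (k : 'I_N), `|p - grid R (rnd p)| <= `|p - grid R k|) ->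
     \sum_s tau s * calib R T (play s (fun h => rnd (prob_rain tau h)) T)
       <= 1 / N%:R).
Proof.
have Hsum := @sum_fd R N hN.
split; first exact: Hsum.
move=> HT tau tau0 tau1 rnd Hr.
apply: (@main_bound R N T tau rnd hN tau0 Hr tau1).
rewrite Hsum.
have hx : 0 < N%:R :> R by rewrite ltr0n.
have -> : 4 * N%:R ^+ 2 * (N%:R / 6 + 1 / 4 - 1 / (6 * N%:R)) =
   (2 / 3 : R) * N%:R ^+ 3 + N%:R ^+ 2 - (2 / 3) * N%:R.
  by field; lra.
exact: HT.
Qed.
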